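(* Let $G$ be a connected weighted multigraph on the vertex set $V$, $|V|=n\ge2$, with positive edge weights, weighted adjacency matrix $A$, spectral radius $\rho$ and Perron vector $p=(p_1,\dots,p_n)^{\mathsf T}$, and let $\Lambda=\rho I-A$. For $j\in V$ let $\bar Y(j)$ be the $n\times n$ matrix obtained from $(\Lambda_{jj})^{-1}$ by inserting a zero row $j$ and a zero column $j$, and let $\bar Y(j)^i$ denote its column indexed by $i$. Then for all distinct $i,j\in V$, the vector $\bar Y(j)^i\,p_j+\bar Y(i)^j\,p_i$ is a positive multiple of $p$.
   Context: $A=(a_{ij})$ has $a_{ij}$ equal to the sum of weights of the edges joining $i$ and $j$ (loops, multiple edges allowed). The Perron vector $p$ is the positive eigenvector of $A$ for $\rho$ with entries summing to 1. $\Lambda_{jj}$ is $\Lambda$ with row and column $j$ deleted (rows and columns indexed by $V\setminus\{j\}$); it is invertible. *)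

(* Defs.v *)
From HB Require Import structures.
From mathcomp Require Import all_boot all_order all_algebra.
From mathcomp Require Import reals.
From mathcomp Require Import complex.
Set Implicit Arguments. Unset Strict Implicit. Unset Printing Implicit Defensive.
Import Order.TTheory GRing.Theory Num.Theory.
Local Open Scope ring_scope.

(* Weighted adjacency matrix of a weighted multigraph with positive edge
   weights (loops and multiple edges allowed): a_ij = total weight of the
   edges joining i and j, so A is symmetric with nonnegative entries, and
   i,j are adjacent iff a_ij > 0. *)
Definition weighted_adjacency (R : realType) (m : nat) (A : 'M[R]_m) : Prop :=
  A^T = A /\ forall i j, 0 <= A i j.

Definition adj_rel (R : realType) (m : nat) (A : 'M[R]_m) : rel 'I_m :=
  fun i j => 0 < A i j.

Definition connected_graph (R : realType) (m : nat) (A : 'M[R]_m) : Prop :=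
  forall i j : 'I_m, connect (adj_rel A) i j.

Definition cplx_mx (R : realType) (m : nat) (A : 'M[R]_m) : 'M[R[i]]_m :=
  map_mx (fun x : R => x%:C%C) A.

Definition spectral_radius (R : realType) (m : nat) (A : 'M[R]_m) (rho : R) : Prop :=
  (exists z : R[i], eigenvalue (cplx_mx A) z /\ `|z| = rho%:C%C) /\
  (forall z : R[i], eigenvalue (cplx_mx A) z -> `|z| <= rho%:C%C).

Definition perron_vector (R : realType) (m : nat) (A : 'M[R]_m) (rho : R)
    (p : 'cV[R]_m) : Prop :=
  A *m p = rho *: p /\ (forall i, 0 < p i 0) /\ \sum_i p i 0 = 1.

Definition Lam (R : realType) (m : nat) (A : 'M[R]_m) (rho : R) : 'M[R]_m :=
  rho%:M - A.

Definition Lam_del (R : realType) (m : nat) (A : 'M[R]_m.+1) (rho : R)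
    (j : 'I_m.+1) : 'M[R]_m :=
  row' j (col' j (Lam A rho)).

Definition Ybar (R : realType) (m : nat) (A : 'M[R]_m.+1) (rho : R)
    (j : 'I_m.+1) : 'M[R]_m.+1 :=
  \matrix_(a, b)
    match unlift j a, unlift j b with
    | Some a', Some b' => invmx (Lam_del A rho j) a' b'
    | _, _ => 0
    end.

(* Main.v *)
Require Import Defs.
From HB Require Import structures.
From mathcomp Require Import all_boot all_order all_algebra.
From mathcomp Require Import reals.
From mathcomp Require Import complex.
From mathcomp Require Import ring.
Import Order.TTheory GRing.Theory Num.Theory.
Local Open Scope ring_scope.

Section S.
Variables (R : realType) (m : nat).
Local Notation N := m.+1.
Variables (A : 'M[R]_N) (rho : R) (p : 'cV[R]_N).
Hypothesis Asym : forall k l, A k l = A l k.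
Hypothesis Ape : forall k, \sum_l A k l * p l 0 = rho * p k 0.
Hypothesis ppos : forall k, 0 < p k 0.
Hypothesis conn : forall i j : 'I_N, connect (adj_rel A) i j.
Hypothesis Age0 : forall k l, 0 <= A k l.

Lemma LamxE (x : 'cV[R]_N) k :
  (Lam A rho *m x) k 0 = rho * x k 0 - \sum_l A k l * x l 0.
Proof.
rewrite /Lam mulmxBl mul_scalar_mx !mxE; congr (_ - _).
Qed.

Lemma Lam_sym k l : Lam A rho k l = Lam A rho l k.
Proof. by rewrite /Lam !mxE Asym eq_sym. Qed.

Lemma QF_id (u : 'I_N -> R) :
  2 * \sum_k (p k 0 * u k) * (rho * (p k 0 * u k) - \sum_l A k l * (p l 0 * u l))
  = \sum_k \sum_l A k l * p k 0 * p l 0 * (u k - u l) ^+ 2.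
Proof.
have E1 : \sum_k \sum_l A k l * p k 0 * p l 0 * u k ^+ 2
   = \sum_k rho * (p k 0 * u k) ^+ 2.
  apply: eq_bigr => k _.
  transitivity (p k 0 * u k ^+ 2 * \sum_l A k l * p l 0).
    by rewrite mulr_sumr; apply: eq_bigr => l _; ring.
  by rewrite Ape; ring.
have E2 : \sum_k \sum_l A k l * p k 0 * p l 0 * u l ^+ 2
   = \sum_k rho * (p k 0 * u k) ^+ 2.
  rewrite exchange_big -E1 /=; apply: eq_bigr => k _; apply: eq_bigr => l _.
  by rewrite Asym; ring.
have E3 : \sum_k \sum_l A k l * p k 0 * p l 0 * (u k - u l) ^+ 2 =
  \sum_k \sum_l A k l * p k 0 * p l 0 * u k ^+ 2
  + \sum_k \sum_l A k l * p k 0 * p l 0 * u l ^+ 2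
  - 2 * \sum_k (p k 0 * u k) * \sum_l A k l * (p l 0 * u l).
  rewrite mulr_sumr -!big_split -sumrB /=; apply: eq_bigr => k _.
  rewrite -!big_split /= mulr_sumr mulr_sumr -sumrB; apply: eq_bigr => l _.
  ring.
rewrite E3 E1 E2 mulr_sumr mulr_sumr -big_split /= -sumrB; apply: eq_bigr => k _.
ring.
Qed.
Definition QF (x : 'cV[R]_N) := \sum_k x k 0 * (Lam A rho *m x) k 0.

Lemma QF_u (x : 'cV[R]_N) : 2 * QF x =
  \sum_k \sum_l A k l * p k 0 * p l 0 * (x k 0 / p k 0 - x l 0 / p l 0) ^+ 2.
Proof.
rewrite -QF_id; congr (_ * _); apply: eq_bigr => k _.
have hx : forall k, x k 0 = p k 0 * (x k 0 / p k 0).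
  by move=> k1; rewrite mulrC divfK // gt_eqF.
rewrite LamxE -!hx; congr (_ * (_ - _)); apply: eq_bigr => l _.
by rewrite -hx.
Qed.

Lemma QF_ge0 x : 0 <= QF x.
Proof.
have : 0 <= 2 * QF x.
  rewrite QF_u; apply: sumr_ge0 => k _; apply: sumr_ge0 => l _.
  apply: mulr_ge0; last exact: sqr_ge0.
  by rewrite !mulr_ge0 // ltW.
by rewrite pmulr_rge0.
Qed.

Lemma QF_ker x : QF x <= 0 -> exists c, x = c *: p.
Proof.
move=> hle.
have h0 : QF x = 0 by apply/eqP; rewrite eq_le hle QF_ge0.
set u := fun k => x k 0 / p k 0.
have hs : 2 * QF x = 0 by rewrite h0 mulr0.
rewrite QF_u in hs.
have Hedge : forall k l, 0 < A k l -> u k = u l.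
  move=> k l hA.
  have hin := psumr_eq0P (fun k _ => sumr_ge0 _ (fun l _ =>
    (mulr_ge0 (mulr_ge0 (mulr_ge0 (Age0 k l) (ltW (ppos k))) (ltW (ppos l)))
       (sqr_ge0 (x k 0 / p k 0 - x l 0 / p l 0))))) hs.
  have := psumr_eq0P (fun l _ =>
    (mulr_ge0 (mulr_ge0 (mulr_ge0 (Age0 k l) (ltW (ppos k))) (ltW (ppos l)))
       (sqr_ge0 (x k 0 / p k 0 - x l 0 / p l 0)))) (hin k isT).
  move/(_ l isT)/eqP; rewrite !mulf_eq0 (gt_eqF hA) !(gt_eqF (ppos _)) /=.
  by rewrite orbb subr_eq0 => /eqP.
have Hpath : forall s k, path (adj_rel A) k s -> u k = u (last k s).
  elim=> [|a s IH] k //= /andP [hka hp].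
  by rewrite (Hedge _ _ hka) IH.
case: (pickP (predT : pred 'I_N)) => [k0 _|hn]; last first.
  by exists 0; apply/matrixP => k; have := hn k.
exists (u k0); apply/matrixP => k z; rewrite (ord1 z) mxE.
have /connectP [s hs' ->] := conn k0 k.
by rewrite (Hpath _ _ hs') /u divfK // gt_eqF.
Qed.

Lemma p_orth (x : 'cV[R]_N) : \sum_k p k 0 * (Lam A rho *m x) k 0 = 0.
Proof.
under eq_bigr => k _ do rewrite (LamxE x k) mulrBr mulr_sumr.
rewrite sumrB exchange_big /=; apply/eqP; rewrite subr_eq0; apply/eqP; apply: eq_bigr => l _.
symmetry; transitivity (x l 0 * \sum_k A l k * p k 0); last by rewrite Ape; ring.
rewrite mulr_sumr; apply: eq_bigr => k _; rewrite Asym; ring.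
Qed.

Lemma Lam_del_unit j : Lam_del A rho j \in unitmx.
Proof.
rewrite unitmxE unitfE; apply/negP => /det0P [v vn0 hv].
pose x : 'cV[R]_N := \col_k (oapp (fun a => v 0 a) 0 (unlift j k)).
have xj : x j 0 = 0 by rewrite mxE unlift_none.
have xl : forall a, x (lift j a) 0 = v 0 a by move=> a; rewrite mxE liftK.
have hL : forall a, (Lam A rho *m x) (lift j a) 0 = 0.
  move=> a; rewrite mxE (bigD1_ord j) //= xj mulr0 add0r.
  transitivity ((v *m Lam_del A rho j) 0 a); last by rewrite hv mxE.
  rewrite mxE; apply: eq_bigr => b _; rewrite xl /Lam_del !mxE. by rewrite eq_sym Asym mulrC.
have hQ : QF x <= 0.
  rewrite /QF (bigD1_ord j) //= xj mul0r add0r big1 // => a _.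
  by rewrite hL mulr0.
have [c hc] := QF_ker _ hQ.
have c0 : c = 0.
  have := congr1 (fun M : 'cV[R]_N => M j 0) hc; rewrite xj mxE => /esym/eqP.
  by rewrite mulf_eq0 (gt_eqF (ppos _)) orbF => /eqP.
move/negP: vn0; apply; apply/eqP/matrixP => z a; rewrite (ord1 z) -xl hc c0.
by rewrite !mxE mul0r.
Qed.

Section Col.
Variables (i j : 'I_N).
Hypothesis hij : i != j.
Let y := col i (Ybar A rho j).

Lemma y_j : y j 0 = 0.
Proof. by rewrite !mxE unlift_none. Qed.

Lemma Ly k : k != j -> (Lam A rho *m y) k 0 = (k == i)%:R.
Proof.
move=> hk.
case: (unliftP j i) hij => [i' ei|ei]; last by rewrite ei eqxx.
case: (unliftP j k) hk => [b ->|->]; last by rewrite eqxx.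
move=> _ _; rewrite mxE (bigD1_ord j) //= y_j mulr0 add0r.
rewrite ei (inj_eq lift_inj).
transitivity ((Lam_del A rho j *m invmx (Lam_del A rho j)) b i'); last first.
  by rewrite mulmxV ?Lam_del_unit // mxE.
rewrite mxE; apply: eq_bigr => a _; rewrite /y !mxE ei !liftK.
by [].
Qed.

Lemma Ly_j : p j 0 * (Lam A rho *m y) j 0 = - p i 0.
Proof.
have := p_orth y; rewrite (bigD1 j) //= (bigD1 i) //=.
rewrite (Ly i) // eqxx mulr1 big1 ?addr0; first by move/eqP; rewrite addr_eq0 => /eqP.
by move=> k /andP [hkj hki]; rewrite Ly // (negbTE hki) mulr0.
Qed.

Lemma y_pos : 0 < y i 0.
Proof.
rewrite ltNge; apply/negP => hle.
have hQ : QF y <= 0.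
  rewrite /QF (bigD1 j) //= y_j mul0r add0r (bigD1 i) //=.
  rewrite (Ly i) // eqxx mulr1 big1 ?addr0 // => k /andP [hkj hki].
  by rewrite Ly // (negbTE hki) mulr0.
have [c hc] := QF_ker _ hQ.
have c0 : c = 0.
  have := congr1 (fun M : 'cV[R]_N => M j 0) hc; rewrite y_j mxE => /esym/eqP.
  by rewrite mulf_eq0 (gt_eqF (ppos _)) orbF => /eqP.
have := Ly i hij; rewrite eqxx hc c0 scale0r mulmx0 mxE => /eqP.
by rewrite eq_sym oner_eq0.
Qed.
End Col.

End S.

(* vertex set V = 'I_n.+1, so |V| = n.+1 >= 2 *)
Theorem lemma11 (R : realType) (n : nat) (A : 'M[R]_n.+1) (rho : R)
    (p : 'cV[R]_n.+1) :
  (1 <= n)%N ->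
  weighted_adjacency A ->
  connected_graph A ->
  spectral_radius A rho ->
  perron_vector A rho p ->
  forall i j : 'I_n.+1, i != j ->
  exists c : R, 0 < c /\
    p j 0 *: col i (Ybar A rho j) + p i 0 *: col j (Ybar A rho i) = c *: p.
Proof.
move=> _ [AT Age] hconn _ [Ap [ppos _]] i j hij.
have Asym : forall k l, A k l = A l k.
  by move=> k l; have := congr1 (fun M : 'M[R]_n.+1 => M l k) AT; rewrite mxE.
have Ape : forall k, \sum_l A k l * p l 0 = rho * p k 0.
  move=> k; have := congr1 (fun M : 'cV[R]_n.+1 => M k 0) Ap; rewrite !mxE => <-.
  by apply: eq_bigr => l _.
have hji : j != i by rewrite eq_sym.
have Ly1 := Ly _ _ _ _ _ Asym Ape ppos hconn Age _ _ hij.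
have Ly2 := Ly _ _ _ _ _ Asym Ape ppos hconn Age _ _ hji.
have Lj1 := Ly_j _ _ _ _ _ Asym Ape ppos hconn Age _ _ hij.
have Lj2 := Ly_j _ _ _ _ _ Asym Ape ppos hconn Age _ _ hji.
set y := col i (Ybar A rho j).
set z := col j (Ybar A rho i).
set v := p j 0 *: y + p i 0 *: z.
have hE : forall (a b : R) (M1 M2 : 'cV[R]_n.+1) k,
    (a *: M1 + b *: M2) k 0 = a * M1 k 0 + b * M2 k 0 by move=> *; rewrite !mxE.
have hLv : forall k, (Lam A rho *m v) k 0 = 0.
  move=> k; rewrite mulmxDr -!scalemxAr hE.
  case: (eqVneq k j) => [->|hkj].
    by rewrite Lj1 Ly2 // eqxx mulr1 addNr.
  case: (eqVneq k i) => [->|hki].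
    by rewrite Lj2 Ly1 // eqxx mulr1 addrN.
  by rewrite Ly1 // Ly2 // (negbTE hki) (negbTE hkj) !mulr0 addr0.
have hQ : QF _ _ A rho v <= 0.
  by rewrite /QF big1 // => k _; rewrite hLv mulr0.
have [c hc] := QF_ker _ _ _ _ _ Asym Ape ppos hconn Age _ hQ.
exists c; split => //.
have zi : z i 0 = 0 by rewrite /z !mxE unlift_none.
have yi := y_pos _ _ _ _ _ Asym Ape ppos hconn Age _ _ hij.
have := congr1 (fun M : 'cV[R]_n.+1 => M i 0) hc.
have e2 : (c *: p) i 0 = c * p i 0 by rewrite mxE.
rewrite /v hE zi mulr0 addr0 e2 => e.
have : 0 < c * p i 0 by rewrite -e mulr_gt0.
by rewrite pmulr_lgt0.
Qed.
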